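(* Let $H$ be a Hilbert space, $\ell\ge1$, and $\mathbf{b}=[b_1,\dots,b_\ell]^t$ with $b_j\in\mathcal{B}(H)$. Then $b_1,\dots,b_\ell$ are linearly independent if and only if there exist vectors $\xi_1,\dots,\xi_m\in H$ such that $\sum_{k=1}^mQ(\mathbf{b},\xi_k)$ is positive definite.
   Context: For $\xi\in H$, $Q(\mathbf{b},\xi)=(\langle b_i^*b_j\xi,\xi\rangle)_{i,j=1}^\ell=(\langle b_j\xi,b_i\xi\rangle)_{i,j=1}^\ell\in M_\ell(\mathbb{C})$. *)

(* Defs.v *)
(* Hilbert spaces over C = R[i] (R : realType), via the
   sesquilinear library's positive-definite hermitian forms {dot H for conjC}. *)
From HB Require Import structures.
From mathcomp Require Import all_boot all_order all_algebra.
From mathcomp Require Import complex reals.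
Set Implicit Arguments. Unset Strict Implicit. Unset Printing Implicit Defensive.
Import Order.TTheory GRing.Theory Num.Theory Num.Def.
Local Open Scope ring_scope.
Local Open Scope complex_scope.

Section Hilbert.
Variable R : realType.
Local Notation C := R[i].
Variable H : lmodType C.
(* inner product <x, y> = ip x y : linear in x, conjugate-linear in y,
   hermitian, and <x,x> > 0 for x <> 0 *)
Variable ip : {dot H for conjC}.

Definition hnorm (x : H) : C := sqrtC (ip x x).

Definition cauchy_seq (u : nat -> H) : Prop :=
  forall e : C, 0 < e -> exists N : nat, forall m n : nat,
    (N <= m)%N -> (N <= n)%N -> hnorm (u m - u n) < e.
Definition converges_to (u : nat -> H) (x : H) : Prop :=
  forall e : C, 0 < e -> exists N : nat, forall n : nat,
    (N <= n)%N -> hnorm (u n - x) < e.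
Definition hilbert_complete : Prop :=
  forall u : nat -> H, cauchy_seq u -> exists x : H, converges_to u x.

Definition bounded_op (b : {linear H -> H}) : Prop :=
  exists M : C, forall x : H, hnorm (b x) <= M * hnorm x.

Definition lin_indep_ops (l : nat) (b : 'I_l -> {linear H -> H}) : Prop :=
  forall c : 'I_l -> C,
    (forall x : H, \sum_(i < l) c i *: b i x = 0) -> forall i, c i = 0.

Definition Qmx (l : nat) (b : 'I_l -> {linear H -> H}) (xi : H) : 'M[C]_l :=
  \matrix_(i < l, j < l) ip (b j xi) (b i xi).
End Hilbert.

Definition posdef_mx (R : realType) (l : nat) (A : 'M[R[i]]_l) : Prop :=
  map_mx conjC (A^T) = A /\
  forall v : 'cV[R[i]]_l, v != 0 -> 0 < (map_mx conjC (v^T) *m A *m v) 0 0.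

(* Main.v *)
Require Import Defs.
From HB Require Import structures.
From mathcomp Require Import all_boot all_order all_algebra.
From mathcomp Require Import complex reals.
From Stdlib Require Import Classical.
Import Order.TTheory GRing.Theory Num.Theory Num.Def.
Local Open Scope ring_scope.
Local Open Scope complex_scope.

Section Aux.
Variable R : realType.
Local Notation C := R[i].
Variable H : lmodType C.
Variable ip : {dot H for conjC}.
Variable l : nat.
Variable b : 'I_l -> {linear H -> H}.

Definition Tv (u : 'rV[C]_l) (x : H) : H := \sum_j u 0 j *: b j x.
Definition SS (s : seq H) : 'M[C]_l := \sum_(x <- s) Qmx ip b x.

Lemma F1 s u i : (u *m (SS s)^T) 0 i = \sum_(x <- s) ip (Tv u x) (b i x).
Proof.
rewrite mxE.
under eq_bigr => j _ do rewrite mxE summxE big_distrr.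
rewrite exchange_big /=; apply: eq_bigr => x _.
rewrite /Tv linear_sumlz; apply: eq_bigr => j _.
by rewrite mxE linearZl_LR.
Qed.

Lemma F2 s u : \sum_i (u *m (SS s)^T) 0 i * (u 0 i)^* =
  \sum_(x <- s) ip (Tv u x) (Tv u x).
Proof.
under eq_bigr => i _ do rewrite F1 big_distrl.
rewrite exchange_big /=; apply: eq_bigr => x _.
rewrite {2}/Tv linear_sumr; apply: eq_bigr => j _.
by rewrite linearZr_LR /= mulrC.
Qed.

Lemma kerP s u : (u <= kermx (SS s)^T)%MS <-> (forall x, x \in s -> Tv u x = 0).
Proof.
rewrite sub_kermx; split.
  move=> /eqP h0.
  have := F2 s u; rewrite h0.
  under eq_bigr => i _ do rewrite mxE mul0r.
  rewrite big1 // => /esym /eqP; rewrite psumr_eq0; last by move=> *; apply: dnorm_ge0.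
  move=> /allP h x xs; have := h x xs; rewrite /= dnorm_eq0 => /eqP //.
move=> h; apply/eqP/rowP => i; rewrite F1 mxE big_seq big1 // => x xs.
by rewrite h // linear0l.
Qed.

Lemma quadE s (v : 'cV[C]_l) :
  (map_mx conjC v^T *m SS s *m v) 0 0 = \sum_(x <- s) ip (Tv v^T x) (Tv v^T x).
Proof.
rewrite -F2 mxE.
under eq_bigr => i _ do rewrite mxE big_distrl.
under [RHS]eq_bigr => i _ do rewrite mxE big_distrl.
rewrite exchange_big; apply: eq_bigr => i _; apply: eq_bigr => j _.
rewrite !mxE /=; by rewrite [LHS]mulrC mulrA [RHS]mulrAC.
Qed.

Lemma herm_SS s : map_mx conjC (SS s)^T = SS s.
Proof.
apply/matrixP => i j; rewrite !mxE !summxE rmorph_sum; apply: eq_bigr => x _.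
by rewrite !mxE (hermC ip (b j x)) /= expr0 mul1r.
Qed.

Lemma done_case s : kermx (SS s)^T = 0 ->
  forall u, (forall x, x \in s -> Tv u x = 0) -> u = 0.
Proof.
move=> K0 u /kerP; rewrite K0 submx0 => /eqP //.
Qed.

Lemma step_case s (hind : lin_indep_ops b) i :
  row i (kermx (SS s)^T) != 0 ->
  exists y, (\rank (kermx (SS (y :: s))^T) < \rank (kermx (SS s)^T))%N.
Proof.
set u := row i _ => u0.
have uK : (u <= kermx (SS s)^T)%MS by apply: row_sub.
have [y Ty] : exists y, Tv u y != 0.
  apply: NNPP => hn.
  have hc : forall j, u 0 j = 0.
    apply: hind => x; apply/eqP; apply: NNPP => hx; apply: hn; exists x; exact/negP.
  by move: u0; rewrite (_ : u = 0) ?eqxx //; apply/rowP => j; rewrite hc mxE.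
exists y; apply: rank_ltmx; rewrite ltmxE; apply/andP; split.
  apply/row_subP => k; apply/kerP => x xs.
  have /kerP := row_sub k (kermx (SS (y :: s))^T); apply.
  by rewrite inE xs orbT.
apply/negP => sub.
have /kerP := submx_trans uK sub => h.
by move: Ty; rewrite h ?inE ?eqxx.
Qed.

Lemma exists_seq (hind : lin_indep_ops b) :
  exists s : seq H, forall u, (forall x, x \in s -> Tv u x = 0) -> u = 0.
Proof.
suff: forall n s, (\rank (kermx (SS s)^T) <= n)%N ->
  exists s : seq H, forall u, (forall x, x \in s -> Tv u x = 0) -> u = 0.
  by move=> /(_ _ ([::] : seq H) (leqnn _)).
elim=> [|n IH] s hr.
  exists s; apply: done_case; apply/eqP; rewrite -mxrank_eq0; by rewrite -leqn0.
case: (boolP [exists i, row i (kermx (SS s)^T) != 0]).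
  move=> /existsP [i /(step_case _ hind)] [y hy].
  apply: (IH (y :: s)); rewrite -ltnS; exact: leq_trans hy hr.
rewrite negb_exists => /forallP hn.
exists s; apply: done_case; apply/row_matrixP => i.
by have := hn i; rewrite negbK row0 => /eqP.
Qed.
End Aux.

Theorem lemma1p11 (R : realType) (H : lmodType R[i])
    (ip : {dot H for conjC}) (Hcomplete : hilbert_complete ip)
    (l : nat) (hl : (1 <= l)%N) (b : 'I_l -> {linear H -> H})
    (hb : forall j, bounded_op ip (b j)) :
  lin_indep_ops b <->
  exists (m : nat) (xi : 'I_m -> H), posdef_mx (\sum_(k < m) Qmx ip b (xi k)).
Proof.
split.
  move=> hind; have [s hs] := exists_seq _ _ ip _ _ hind.
  exists (size s), (fun k => nth 0 s k).
  have -> : \sum_(k < size s) Qmx ip b (nth 0 s k) = SS _ _ ip _ b s.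
    by rewrite /SS (big_nth 0) big_mkord.
  split; first exact: herm_SS.
  move=> v v0; rewrite quadE.
  have u0 : v^T != 0 by apply: contra v0 => /eqP h; rewrite -(trmxK v) h trmx0.
  have [x xs Tx] : exists2 x, x \in s & Tv _ _ _ b v^T x != 0.
    apply: NNPP => hn; move/eqP: u0; apply; apply: hs => x xs.
    apply/eqP; apply: NNPP => hx; apply: hn; exists x => //; exact/negP.
  rewrite lt0r sumr_ge0 ?andbT; last by move=> *; apply: dnorm_ge0.
  rewrite psumr_eq0; last by move=> *; apply: dnorm_ge0.
  apply/negP => /allP /(_ x xs) /=; rewrite dnorm_eq0; exact/negP.
move=> [m [xi [_ hpos]]] c hc i.
pose v : 'cV[R[i]]_l := \col_j c j.
have eS : \sum_(k < m) Qmx ip b (xi k) = SS _ _ ip _ b [seq xi k | k <- index_enum 'I_m].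
  by rewrite /SS big_map.
rewrite eS in hpos.
have [v0|vn0] := eqVneq v 0.
  by have := congr1 (fun M : 'cV[R[i]]_l => M i 0) v0; rewrite !mxE.
have := hpos v vn0; rewrite quadE big1 ?ltxx // => x _.
have -> : Tv _ _ _ b v^T x = \sum_(j < l) c j *: b j x.
  by apply: eq_bigr => j _; rewrite !mxE.
by rewrite hc linear0l.
Qed.
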